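(* Let $\mathcal{L}_1=(L_1,\nu_1)$ and $\mathcal{L}_2=(L_2,\nu_2)$ be propositional languages with common fragment $\mathcal{L}=(L_1\cap L_2,\nu)$, where $\nu=\nu_1|_{L_1\cap L_2}=\nu_2|_{L_1\cap L_2}$, and let $i_1:\Sigma_{\mathcal{L}}\to\Sigma_{\mathcal{L}_1}$, $i_2:\Sigma_{\mathcal{L}}\to\Sigma_{\mathcal{L}_2}$ be the monoid embeddings sending $\sigma$ to the unique substitution agreeing with $\sigma$ on $\mathrm{Var}$. Then the amalgam $(\Sigma_{\mathcal{L}},i_1,\Sigma_{\mathcal{L}_1},i_2,\Sigma_{\mathcal{L}_2})$ is strongly embeddable in $\Sigma_{\mathcal{L}_1\cup\mathcal{L}_2}$, i.e., there exist injective monoid homomorphisms $j_1:\Sigma_{\mathcal{L}_1}\to\Sigma_{\mathcal{L}_1\cup\mathcal{L}_2}$ and $j_2:\Sigma_{\mathcal{L}_2}\to\Sigma_{\mathcal{L}_1\cup\mathcal{L}_2}$ with $j_1\circ i_1=j_2\circ i_2$ and $j_1[\Sigma_{\mathcal{L}_1}]\cap j_2[\Sigma_{\mathcal{L}_2}]=j_1i_1[\Sigma_{\mathcal{L}}]=j_2i_2[\Sigma_{\mathcal{L}}]$.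
   Context: A propositional language $(L,\nu)$ is a set $L$ of connectives with arity function $\nu:L\to\omega$. Fix a denumerable set $\mathrm{Var}$ of variables; $\mathit{Fm}_{\mathcal{L}}$ is the absolutely free $\mathcal{L}$-algebra over $\mathrm{Var}$ and $\Sigma_{\mathcal{L}}$ is the monoid, under composition, of endomorphisms of $\mathit{Fm}_{\mathcal{L}}$ (substitutions); each substitution is determined by its values on $\mathrm{Var}$. $\mathcal{L}_1\cup\mathcal{L}_2$ is the language $(L_1\cup L_2,\nu_1\cup\nu_2)$. *)

(* Defs.v *)
From mathcomp Require Import all_boot.
Set Implicit Arguments. Unset Strict Implicit. Unset Printing Implicit Defensive.

Inductive fm (C : Type) : Type :=
| Var of nat
| App of C & seq (fm C).
Arguments Var {C} _.

Record lang (C : Type) := Lang { conn : pred C ; arity : C -> nat }.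

Fixpoint wf (C : Type) (L : lang C) (t : fm C) : bool :=
  match t with
  | Var _ => true
  | App c ts => [&& conn L c, size ts == arity L c & all (wf L) ts]
  end.

Definition Fm (C : Type) (L : lang C) := {t : fm C | wf L t}.

Definition var (C : Type) (L : lang C) (n : nat) : Fm L :=
  exist (fun t => wf L t) (Var n) isT.

(* the operation of the algebra Fm_L associated with connective c
   (only meaningful when c is in L and args has the right length) *)
Definition appF (C : Type) (L : lang C) (c : C) (args : seq (Fm L)) : Fm L :=
  odflt (var L 0) (insub (App c (map val args))).

Definition is_endo (C : Type) (L : lang C) (f : Fm L -> Fm L) : Prop :=
  forall c (args : seq (Fm L)), conn L c -> size args = arity L c ->
    f (appF c args) = appF c (map f args).

Definition Subst (C : Type) (L : lang C) := {f : Fm L -> Fm L | is_endo f}.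

Lemma is_endo_id (C : Type) (L : lang C) : is_endo (fun t : Fm L => t).
Proof. by move=> c args _ _; rewrite map_id. Qed.

Lemma is_endo_comp (C : Type) (L : lang C) (f g : Fm L -> Fm L) :
  is_endo f -> is_endo g -> is_endo (fun t => f (g t)).
Proof.
move=> hf hg c args hc hs; rewrite hg // hf ?size_map //.
by rewrite -map_comp.
Qed.

Definition sid (C : Type) (L : lang C) : Subst L := exist _ _ (@is_endo_id C L).
Definition scomp (C : Type) (L : lang C) (s t : Subst L) : Subst L :=
  exist _ _ (is_endo_comp (proj2_sig s) (proj2_sig t)).

Definition monoid_hom (C : Type) (L L' : lang C) (j : Subst L -> Subst L') : Prop :=
  j (sid L) = sid L' /\ forall s t, j (scomp s t) = scomp (j s) (j t).

Definition lang_union (C : Type) (L1 L2 : lang C) : lang C :=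
  Lang (predU (conn L1) (conn L2))
       (fun c => if conn L1 c then arity L1 c else arity L2 c).
Definition lang_inter (C : Type) (L1 L2 : lang C) : lang C :=
  Lang (predI (conn L1) (conn L2)) (arity L1).

Definition app_sub (C : Type) (L : lang C) (s : Subst L) (t : Fm L) : Fm L :=
  proj1_sig s t.

(* Main.v *)
Require Import Defs.
From mathcomp Require Import all_boot.
From Stdlib Require Import FunctionalExtensionality ProofIrrelevance.
From Stdlib Require List.
Set Implicit Arguments. Unset Strict Implicit. Unset Printing Implicit Defensive.

Section Aux.
Variable C : Type.

Fixpoint fm_ind2 (P : fm C -> Prop) (hv : forall n, P (Var n))
  (ha : forall c ts, (forall t, List.In t ts -> P t) -> P (App c ts)) (t : fm C) : P t :=
  match t with
  | Var n => hv n
  | App c ts => ha c ts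
      ((fix go (l : seq (fm C)) : forall t, List.In t l -> P t :=
          match l return forall t, List.In t l -> P t with
          | nil => fun t H => False_ind _ H
          | x :: r => fun t H => match H with
                      | or_introl e => eq_ind x P (fm_ind2 (P:=P) hv ha x) t e
                      | or_intror h => go r t h end
          end) ts)
  end.

Fixpoint subst (s : nat -> fm C) (t : fm C) : fm C :=
  match t with
  | Var n => s n
  | App c ts => App c (map (subst s) ts)
  end.

Lemma all_In (T : Type) (p : pred T) (l : seq T) :
  all p l <-> (forall t, List.In t l -> p t).
Proof.
elim: l => [|x l IH] /=; first by split.
split.
  by move=> /andP [px /IH h] t [<-|/h].
move=> h; apply/andP; split; first by apply: h; left.
by apply/IH => t ht; apply: h; right.
Qed.

Lemma map_ext_In (T U : Type) (f g : T -> U) (l : seq T) :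
  (forall t, List.In t l -> f t = g t) -> map f l = map g l.
Proof.
elim: l => [|x l IH] //= h; rewrite h; last by left.
by rewrite IH // => t ht; apply: h; right.
Qed.

Lemma In_map (T U : Type) (f : T -> U) (l : seq T) x :
  List.In x l -> List.In (f x) (map f l).
Proof. elim: l => [|y l IH] //= [->|h]; [by left | by right; apply: IH]. Qed.

Lemma subst_ext s1 s2 t : (forall n, s1 n = s2 n) -> subst s1 t = subst s2 t.
Proof.
move=> h; elim/fm_ind2: t => [n|c ts IH] /=; first exact: h.
by congr App; apply: map_ext_In.
Qed.

Lemma subst_var t : subst (@Var C) t = t.
Proof.
elim/fm_ind2: t => [n|c ts IH] //=; congr App.
rewrite -[RHS]map_id; exact: map_ext_In.
Qed.

Lemma wf_subst (L : lang C) s t : (forall n, wf L (s n)) -> wf L t -> wf L (subst s t).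
Proof.
move=> hs; elim/fm_ind2: t => [n|c ts IH] //= /and3P [hc hz ha].
rewrite hc size_map hz /=; apply/all_In => u /List.in_map_iff [v [<- hv]].
by apply: IH => //; move/all_In: ha; apply.
Qed.

Lemma wf_App_vals (L : lang C) c (args : seq (Fm L)) :
  conn L c -> size args = arity L c -> wf L (App c (map val args)).
Proof.
move=> hc hs /=; rewrite hc size_map hs eqxx /=.
by apply/all_In => u /List.in_map_iff [v [<- _]]; apply: valP.
Qed.

Lemma val_appF (L : lang C) c (args : seq (Fm L)) :
  conn L c -> size args = arity L c -> val (appF c args) = App c (map val args).
Proof.
move=> hc hs; rewrite /appF -/(insubd _ _) val_insubd.
by rewrite (wf_App_vals hc hs).
Qed.

Lemma map_val_pmap (L : lang C) ts : all (wf L) ts ->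
  map val (pmap (insub : fm C -> option (Fm L)) ts) = ts.
Proof.
elim: ts => [|x ts IH] //= /andP [hx ha].
by rewrite insubT /= IH.
Qed.

Lemma key (L : lang C) (f : Fm L -> Fm L) : is_endo f ->
  forall t (h : wf L t), val (f (exist _ t h)) = subst (fun n => val (f (var L n))) t.
Proof.
move=> hf t; elim/fm_ind2: t => [n|c ts IH] h.
  by congr (val (f _)); apply: val_inj.
have h' := h; move: h' => /= /and3P [hc /eqP hz ha].
set args := pmap (insub : fm C -> option (Fm L)) ts.
have ea : map val args = ts by exact: map_val_pmap.
have hsz : size args = arity L c by rewrite -hz -ea size_map.
have -> : exist (fun t => wf L t) (App c ts) h = appF c args.
  by apply: val_inj; rewrite val_appF // ea.
rewrite hf // val_appF ?size_map //= -map_comp -{1}ea -map_comp.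
congr App; apply: map_ext_In => a ha' /=.
case: a ha' => x hx ha' /=; apply: IH.
by rewrite -ea; apply: (In_map val ha').
Qed.

Lemma subst_ext_eq (L : lang C) (s t : Subst L) :
  (forall n, val (app_sub s (var L n)) = val (app_sub t (var L n))) -> s = t.
Proof.
move=> h; case: s t h => [f hf] [g hg] /= h.
have efg : f = g.
  apply: functional_extensionality => -[x hx]; apply: val_inj.
  by rewrite (key hf) (key hg); apply: subst_ext.
subst g; congr exist; apply: proof_irrelevance.
Qed.

Definition mkfun (L : lang C) (s : nat -> fm C) (hs : forall n, wf L (s n))
  (x : Fm L) : Fm L := exist _ (subst s (val x)) (wf_subst hs (valP x)).

Lemma mk_endo (L : lang C) s hs : is_endo (@mkfun L s hs).
Proof.
move=> c args hc hsz; apply: val_inj.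
rewrite /= val_appF // val_appF ?size_map //= -map_comp -map_comp.
by congr App; apply: map_ext_In.
Qed.

Definition mk (L : lang C) s hs : Subst L := exist _ _ (@mk_endo L s hs).

Lemma mk_var (L : lang C) s hs n : val (app_sub (@mk L s hs) (var L n)) = s n.
Proof. by []. Qed.

Lemma app_sub_var_gen (L : lang C) (s : Subst L) (x : Fm L) :
  val (app_sub s x) = subst (fun n => val (app_sub s (var L n))) (val x).
Proof. case: x => x hx; case: s => f hf /=; exact: key. Qed.

Lemma subst_comp s1 s2 t : subst s1 (subst s2 t) = subst (fun n => subst s1 (s2 n)) t.
Proof.
elim/fm_ind2: t => [n|c ts IH] //=; congr App; rewrite -map_comp.
exact: map_ext_In.
Qed.

End Aux.

Section Main.
Variables (C : Type) (L1 L2 : lang C).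
Hypothesis hnu : forall c, conn L1 c -> conn L2 c -> arity L1 c = arity L2 c.

Lemma wf_U1 t : wf L1 t -> wf (lang_union L1 L2) t.
Proof.
elim/fm_ind2: t => [n|c ts IH] //= /and3P [hc hz ha].
rewrite /= hc /= hz /=; apply/all_In => u hu; apply: IH => //.
by move/all_In: ha; apply.
Qed.

Lemma wf_U2 t : wf L2 t -> wf (lang_union L1 L2) t.
Proof.
elim/fm_ind2: t => [n|c ts IH] //= /and3P [hc hz ha].
rewrite /= hc orbT /=; apply/andP; split => //.
  by case: ifP => // h1; rewrite hnu.
by apply/all_In => u hu; apply: IH => //; move/all_In: ha; apply.
Qed.

Lemma wf_I t : wf L1 t -> wf L2 t -> wf (lang_inter L1 L2) t.
Proof.
elim/fm_ind2: t => [n|c ts IH] //= /and3P [hc hz ha] /and3P [hc' hz' ha'].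
rewrite /= hc hc' hz /=; apply/all_In => u hu; apply: IH => //.
  by move/all_In: ha; apply.
by move/all_In: ha'; apply.
Qed.

Definition J1 (s : Subst L1) : Subst (lang_union L1 L2) :=
  @mk _ (lang_union L1 L2) (fun n => val (app_sub s (var L1 n)))
    (fun n => wf_U1 (valP (app_sub s (var L1 n)))).
Definition J2 (s : Subst L2) : Subst (lang_union L1 L2) :=
  @mk _ (lang_union L1 L2) (fun n => val (app_sub s (var L2 n)))
    (fun n => wf_U2 (valP (app_sub s (var L2 n)))).

Lemma J1_var s n : val (app_sub (J1 s) (var _ n)) = val (app_sub s (var L1 n)).
Proof. by []. Qed.
Lemma J2_var s n : val (app_sub (J2 s) (var _ n)) = val (app_sub s (var L2 n)).
Proof. by []. Qed.

Lemma hom_gen (L : lang C) (J : Subst L -> Subst (lang_union L1 L2))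
  (hJ : forall s n, val (app_sub (J s) (var _ n)) = val (app_sub s (var L n))) :
  monoid_hom J /\ injective J.
Proof.
split; first split.
- by apply: subst_ext_eq => n; rewrite hJ.
- move=> s t; apply: subst_ext_eq => n; rewrite hJ /=.
  rewrite [in RHS]app_sub_var_gen /= hJ /app_sub /= -/(app_sub s _).
  rewrite app_sub_var_gen; apply: subst_ext => m; by rewrite hJ.
- move=> s t e; apply: subst_ext_eq => n; by rewrite -!hJ e.
Qed.

End Main.

Theorem proposition4p2 (C : Type) (L1 L2 : lang C)
  (hnu : forall c, conn L1 c -> conn L2 c -> arity L1 c = arity L2 c)
  (i1 : Subst (lang_inter L1 L2) -> Subst L1)
  (i2 : Subst (lang_inter L1 L2) -> Subst L2)
  (hi1 : forall s n, val (app_sub (i1 s) (var L1 n))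
                     = val (app_sub s (var (lang_inter L1 L2) n)))
  (hi2 : forall s n, val (app_sub (i2 s) (var L2 n))
                     = val (app_sub s (var (lang_inter L1 L2) n))) :
  exists (j1 : Subst L1 -> Subst (lang_union L1 L2))
         (j2 : Subst L2 -> Subst (lang_union L1 L2)),
    [/\ monoid_hom j1 /\ injective j1, monoid_hom j2 /\ injective j2,
        (forall s, j1 (i1 s) = j2 (i2 s)) &
        (forall u, ((exists a, u = j1 a) /\ (exists b, u = j2 b)) <->
                   (exists s, u = j1 (i1 s)))].
Proof.
have h12 : forall s, J1 L2 (i1 s) = J2 hnu (i2 s).
  by move=> s; apply: subst_ext_eq => n; rewrite J1_var J2_var hi1 hi2.
exists (@J1 C L1 L2), (J2 hnu); split.
- exact: (@hom_gen C L1 L2 _ _ (@J1_var C L1 L2)).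
- exact: (@hom_gen C L1 L2 _ _ (J2_var hnu)).
- exact: h12.
move=> u; split.
  move=> [[a ->] [b e]].
  have eab : forall n, val (app_sub a (var L1 n)) = val (app_sub b (var L2 n)).
    by move=> n; rewrite -(@J1_var C L1 L2) e J2_var.
  have hw : forall n, wf (lang_inter L1 L2) (val (app_sub a (var L1 n))).
    move=> n; apply: wf_I; first exact: valP.
    by rewrite eab; apply: valP.
  exists (mk hw); apply: subst_ext_eq => n.
  by rewrite !J1_var hi1 mk_var.
move=> [s ->]; split; first by exists (i1 s).
by exists (i2 s).
Qed.
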